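(* Let $R$ be a commutative ring and $\eta:R\to R^{(-1)}R$ the canonical map. Then: (i) for each prime ideal $\mathfrak q$ of $R^{(-1)}R$, the localization $(R^{(-1)}R)_{\mathfrak q}$ is a field, canonically isomorphic (via the map induced by $\eta$) to the residue field $\kappa(\mathfrak p)=R_{\mathfrak p}/\mathfrak pR_{\mathfrak p}$, where $\mathfrak p=\eta^{-1}(\mathfrak q)$; (ii) the ring $R^{(-1)}R$ is absolutely flat.
   Context: For $a,b$ in a commutative ring, $b$ is a pointwise inverse of $a$ if $a=a^2b$ and $b=b^2a$. For a subset $S\subseteq R$, $S^{(-1)}R=R[x_s:s\in S]/I$ where $I$ is generated by $sx_s^2-x_s$ and $s^2x_s-s$ ($s\in S$), with canonical map $\eta$; here $S=R$. A commutative ring is absolutely flat if every module over it is flat. *)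

(* Defs.v *)
From mathcomp Require Import all_boot all_order all_algebra.
Set Implicit Arguments. Unset Strict Implicit. Unset Printing Implicit Defensive.
Import GRing.Theory.
Local Open Scope ring_scope.

Definition pointwise_inverse (T : comPzRingType) (a b : T) : Prop :=
  a = a ^+ 2 * b /\ b = b ^+ 2 * a.

(** (A, eta, x) is R^(-1)R = R[x_s : s in R]/(s x_s^2 - x_s, s^2 x_s - s),
    characterized by its universal property: it is the initial commutative
    R-algebra equipped with a family (x_s) such that x_s is a pointwise
    inverse of eta s, for every s. *)
Definition is_pinv_hull (R A : comPzRingType) (eta : {rmorphism R -> A})
  (x : R -> A) : Prop :=
  (forall s : R, pointwise_inverse (eta s) (x s)) /\
  forall (B : comPzRingType) (f : {rmorphism R -> B}) (y : R -> B),
    (forall s : R, pointwise_inverse (f s) (y s)) ->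
    (exists g : {rmorphism A -> B},
        (forall r, g (eta r) = f r) /\ (forall s, g (x s) = y s)) /\
    (forall g1 g2 : {rmorphism A -> B},
        (forall r, g1 (eta r) = f r) -> (forall s, g1 (x s) = y s) ->
        (forall r, g2 (eta r) = f r) -> (forall s, g2 (x s) = y s) ->
        g1 =1 g2).

Definition prime_ideal (A : comPzRingType) (q : A -> Prop) : Prop :=
  [/\ q 0,
      (forall a b, q a -> q b -> q (a + b)),
      (forall a b, q b -> q (a * b)),
      ~ q 1 &
      (forall a b, q (a * b) -> q a \/ q b)].

(** Localization A_q at a prime q, presented by fractions a/s (s not in q)
    with the usual equivalence and operations. *)
Section Localization.
Variables (A : comPzRingType) (q : A -> Prop).

Definition loc_eq (x y : A * A) : Prop :=
  exists u, ~ q u /\ u * (x.1 * y.2 - y.1 * x.2) = 0.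
Definition loc_add (x y : A * A) : A * A := (x.1 * y.2 + y.1 * x.2, x.2 * y.2).
Definition loc_mul (x y : A * A) : A * A := (x.1 * y.1, x.2 * y.2).
Definition loc_zero : A * A := (0, 1).
Definition loc_one : A * A := (1, 1).

Definition loc_is_field : Prop :=
  ~ loc_eq loc_zero loc_one /\
  forall x : A * A, ~ q x.2 -> ~ loc_eq x loc_zero ->
    exists y : A * A, ~ q y.2 /\ loc_eq (loc_mul x y) loc_one.

(** Residue field kappa(q) = A_q / q A_q: two fractions are identified when
    their difference in A_q lies in the ideal q A_q = { c/w : c in q }. *)
Definition kappa_eq (x y : A * A) : Prop :=
  exists c w, q c /\ ~ q w /\
    loc_eq (x.1 * y.2 - y.1 * x.2, x.2 * y.2) (c, w).
End Localization.

(** Tensor products M (x)_A N as the free abelian group on M x N (formal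
    integer combinations, compared coefficientwise) modulo the subgroup of
    bilinearity relations; flatness and absolute flatness. *)
Section Tensor.
Variables (A : comPzRingType) (M N : lmodType A).

Definition fcoef (s : seq (int * (M * N))) (p : M * N) : int :=
  \sum_(c <- s | c.2 == p) c.1.

Inductive tens_rel : seq (int * (M * N)) -> Prop :=
| tens_rel_addl m m' n :
    tens_rel [:: (1, (m + m', n)); (-1, (m, n)); (-1, (m', n))]
| tens_rel_addr m n n' :
    tens_rel [:: (1, (m, n + n')); (-1, (m, n)); (-1, (m, n'))]
| tens_rel_scale (a : A) m n :
    tens_rel [:: (1, (a *: m, n)); (-1, (m, a *: n))]
| tens_rel_nil : tens_rel [::]
| tens_rel_cat s t : tens_rel s -> tens_rel t -> tens_rel (s ++ t)
| tens_rel_zscale (k : int) s :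
    tens_rel s -> tens_rel (map (fun c => (k * c.1, c.2)) s)
| tens_rel_free s t : tens_rel s -> fcoef s =1 fcoef t -> tens_rel t.
End Tensor.

(** M is flat: for every injective A-linear f : N' -> N, the induced map
    M (x) N' -> M (x) N is injective (i.e. has trivial kernel). *)
Definition flat_module (A : comPzRingType) (M : lmodType A) : Prop :=
  forall (N' N : lmodType A) (f : {linear N' -> N}), injective f ->
  forall s : seq (int * (M * N')),
    tens_rel (map (fun c => (c.1, (c.2.1, f c.2.2))) s) -> tens_rel s.

Definition absolutely_flat (A : comPzRingType) : Prop :=
  forall M : lmodType A, flat_module M.

(* Main.v *)
From HB Require Import structures.
Require Import Defs.
From mathcomp Require Import all_boot all_order all_algebra.
From mathcomp Require Import ring.
From Stdlib Require Import ClassicalEpsilon Classical.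
From Stdlib Require List.
Import GRing.Theory.
Local Open Scope ring_scope.
Set Implicit Arguments. Unset Strict Implicit.

Section PW.
Variable T : comPzRingType.

Lemma pw_unique (a b b' : T) : pointwise_inverse a b -> pointwise_inverse a b' -> b = b'.
Proof.
move=> [h1 h2] [h1' h2'].
have E1 : a * b = a * b' * (a * b) by rewrite {1}h1' expr2; ring.
have E2 : a * b' = a * b * (a * b') by rewrite {1}h1 expr2; ring.
have E : a * b = a * b' by rewrite E1 mulrC -E2.
have F1 : b = b * (a * b') by rewrite -E {1}h2 expr2; ring.
have F2 : b' = b' * (a * b) by rewrite E {1}h2' expr2; ring.
by rewrite F1 {2}F2; ring.
Qed.

Lemma pw_mul (a b c d : T) : pointwise_inverse a b -> pointwise_inverse c d ->
  pointwise_inverse (a * c) (b * d).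
Proof.
move=> [h1 h2] [h3 h4]; split.
  by rewrite {1}h1 {1}h3 !expr2; ring.
by rewrite {1}h2 {1}h4 !expr2; ring.
Qed.

Lemma pw_one : pointwise_inverse (1 : T) 1.
Proof. by split; rewrite expr1n mulr1. Qed.

Lemma pw_idem (a b : T) : pointwise_inverse a b -> (a * b) * (a * b) = a * b.
Proof. move=> [h1 h2]; have -> : a * b * (a * b) = a ^+ 2 * b * b by rewrite expr2; ring.
by rewrite -h1. Qed.

Lemma pw_absorb (a b : T) : pointwise_inverse a b -> a * (a * b) = a.
Proof. move=> [h1 h2]; have -> : a * (a * b) = a ^+ 2 * b by rewrite expr2; ring.
by rewrite -h1. Qed.

Lemma pw_absorb' (a b : T) : pointwise_inverse a b -> b * (a * b) = b.
Proof. move=> [h1 h2]; have -> : b * (a * b) = b ^+ 2 * a by rewrite expr2; ring.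
by rewrite -h2. Qed.

End PW.


Section Orth.
Variable T : comPzRingType.
Variable I : finType.
Variable ep : I -> T.
Hypothesis hsum : \sum_i ep i = 1.
Hypothesis horth : forall i j, i != j -> ep i * ep j = 0.

Lemma orth_idem i : ep i * ep i = ep i.
Proof.
have : ep i * \sum_j ep j = ep i by rewrite hsum mulr1.
rewrite mulr_sumr (bigD1 i) //= big1 ?addr0 // => j hj.
by apply: horth; rewrite eq_sym.
Qed.

Lemma orth_pick i (g : I -> T) : ep i * \sum_j (ep j * g j) = ep i * g i.
Proof.
rewrite mulr_sumr (bigD1 i) //= big1 ?addr0.
  by rewrite mulrA orth_idem.
move=> j hj; rewrite mulrA horth ?mul0r //; by rewrite eq_sym.
Qed.

Lemma orth_mul (g h : I -> T) :
  (\sum_i ep i * g i) * (\sum_i ep i * h i) = \sum_i ep i * (g i * h i).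
Proof.
rewrite mulr_suml; apply: eq_bigr => i _.
rewrite mulrAC orth_pick; ring.
Qed.
End Orth.

Section Hull.
Variables (R A : comPzRingType) (eta : {rmorphism R -> A}) (x : R -> A).
Hypothesis hx : forall s, pointwise_inverse (eta s) (x s).

Definition ee s := eta s * x s.

Lemma x_mul s t : x (s * t) = x s * x t.
Proof. apply: (pw_unique (hx (s * t))); rewrite rmorphM; exact: pw_mul. Qed.

Lemma ee_mul s t : ee (s * t) = ee s * ee t.
Proof. rewrite /ee x_mul rmorphM; ring. Qed.

Lemma x_one : x 1 = 1.
Proof. apply: (pw_unique (hx 1)); rewrite rmorph1; exact: pw_one. Qed.

Lemma ee_one : ee 1 = 1.
Proof. by rewrite /ee x_one rmorph1 mulr1. Qed.

Definition Good (a : A) : Prop :=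
  exists (I : finType) (ep : I -> A) (r t : I -> R),
    [/\ \sum_i ep i = 1, (forall i j, i != j -> ep i * ep j = 0),
        (forall i, ep i * ee (t i) = ep i) &
        a = \sum_i ep i * (eta (r i) * x (t i))].

Lemma Good_eta r : Good (eta r).
Proof.
exists (bool : finType), (fun b => if b then 1 else 0), (fun b => if b then r else 0),
  (fun _ => 1); split.
- by rewrite big_bool /= addr0.
- by move=> [] [] //= _; rewrite ?mulr0 ?mul0r.
- by move=> i; rewrite ee_one mulr1.
- by rewrite big_bool /= x_one !mul0r addr0 !mul1r mulr1.
Qed.

Lemma Good_x s : Good (x s).
Proof.
exists (bool : finType), (fun b => if b then ee s else 1 - ee s),
  (fun b => if b then 1 else 0), (fun b => if b then s else 1); split.
- by rewrite big_bool /=; ring.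
- have hi := pw_idem (hx s); rewrite /ee.
  move=> [] [] //= _; rewrite ?mulrBr ?mulrBl ?mulr1 ?mul1r hi subrr //.
- have hi := pw_idem (hx s).
  by move=> [] /=; [exact: hi | rewrite ee_one mulr1].
- rewrite big_bool /= rmorph0 rmorph1 !mul0r mulr0 addr0 mul1r.
  by rewrite /ee mulrC pw_absorb'.
Qed.

Lemma Good_opp a : Good a -> Good (- a).
Proof.
case=> I [ep [r [t [h1 h2 h3 ->]]]].
exists I, ep, (fun i => - r i), t; split => //.
rewrite -sumrN; apply: eq_bigr => i _; rewrite rmorphN; ring.
Qed.

Lemma orth_pair (I J : finType) (ep : I -> A) (ep' : J -> A) :
  (forall i j, i != j -> ep i * ep j = 0) ->
  (forall i j, i != j -> ep' i * ep' j = 0) ->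
  forall p q : I * J, p != q -> (ep p.1 * ep' p.2) * (ep q.1 * ep' q.2) = 0.
Proof.
move=> h h' [i j] [i' j'] /=; case: (eqVneq i i') => [->|hi] hne.
  have hj : j != j' by apply: contraNneq hne => ->.
  by rewrite mulrACA h' // mulr0.
by rewrite mulrACA h // mul0r.
Qed.

Lemma sum_pair (I J : finType) (F : I -> J -> A) :
  \sum_(p : I * J) F p.1 p.2 = \sum_i \sum_j F i j.
Proof. by rewrite pair_big. Qed.

Lemma Good_add a b : Good a -> Good b -> Good (a + b).
Proof.
case=> I [ep [r [t [h1 h2 h3 ->]]]].
case=> J [ep' [r' [t' [h1' h2' h3' ->]]]].
exists ((I * J)%type : finType), (fun p => ep p.1 * ep' p.2),
  (fun p => r p.1 * t' p.2 + r' p.2 * t p.1), (fun p => t p.1 * t' p.2); split.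
- by rewrite (sum_pair (fun i j => ep i * ep' j)) -h1; apply: eq_bigr => i _; rewrite -mulr_sumr h1' mulr1.
- exact: orth_pair.
- by move=> [i j] /=; rewrite ee_mul mulrACA h3 h3'.
rewrite (sum_pair (fun i j => ep i * ep' j * (eta (r i * t' j + r' j * t i) * x (t i * t' j)))).
have -> : \sum_i ep i * (eta (r i) * x (t i)) =
   \sum_i \sum_j (ep i * ep' j) * (eta (r i) * x (t i)).
  apply: eq_bigr => i _; rewrite -mulr_suml -mulr_sumr h1' mulr1 //.
have -> : \sum_j ep' j * (eta (r' j) * x (t' j)) =
   \sum_i \sum_j (ep i * ep' j) * (eta (r' j) * x (t' j)).
  rewrite exchange_big /=; apply: eq_bigr => j _; rewrite -mulr_suml -mulr_suml h1 mul1r //.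
rewrite -big_split /=; apply: eq_bigr => i _; rewrite -big_split /=; apply: eq_bigr => j _ /=.
rewrite rmorphD !rmorphM x_mul.
have -> : ep i * ep' j * ((eta (r i) * eta (t' j) + eta (r' j) * eta (t i)) * (x (t i) * x (t' j)))
  = (ep' j * ee (t' j)) * (ep i * (eta (r i) * x (t i))) + (ep i * ee (t i)) * (ep' j * (eta (r' j) * x (t' j))).
  by rewrite /ee; ring.
rewrite h3 h3'; ring.
Qed.

Lemma Good_mul a b : Good a -> Good b -> Good (a * b).
Proof.
case=> I [ep [r [t [h1 h2 h3 ->]]]].
case=> J [ep' [r' [t' [h1' h2' h3' ->]]]].
exists ((I * J)%type : finType), (fun p => ep p.1 * ep' p.2),
  (fun p => r p.1 * r' p.2), (fun p => t p.1 * t' p.2); split.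
- by rewrite (sum_pair (fun i j => ep i * ep' j)) -h1; apply: eq_bigr => i _; rewrite -mulr_sumr h1' mulr1.
- exact: orth_pair.
- by move=> [i j] /=; rewrite ee_mul mulrACA h3 h3'.
rewrite (sum_pair (fun i j => ep i * ep' j * (eta (r i * r' j) * x (t i * t' j)))) mulr_suml; apply: eq_bigr => i _; rewrite mulr_sumr; apply: eq_bigr => j _ /=.
rewrite !rmorphM x_mul; ring.
Qed.

Lemma Good_reg a : Good a -> exists b, pointwise_inverse a b.
Proof.
case=> I [ep [r [t [h1 h2 h3 ->]]]].
exists (\sum_i ep i * (eta (t i) * x (r i))); split.
  rewrite expr2 !(orth_mul h1 h2); apply: eq_bigr => i _.
  have [k1 k2] := hx (r i); have [k3 k4] := hx (t i).
  have -> : eta (r i) * x (t i) * (eta (r i) * x (t i)) * (eta (t i) * x (r i)) =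
    (eta (r i) ^+ 2 * x (r i)) * (x (t i) ^+ 2 * eta (t i)) by rewrite !expr2; ring.
  by rewrite -k1 -k4.
rewrite expr2 !(orth_mul h1 h2); apply: eq_bigr => i _.
have [k1 k2] := hx (r i); have [k3 k4] := hx (t i).
have -> : eta (t i) * x (r i) * (eta (t i) * x (r i)) * (eta (r i) * x (t i)) =
  (eta (t i) ^+ 2 * x (t i)) * (x (r i) ^+ 2 * eta (r i)) by rewrite !expr2; ring.
by rewrite -k3 -k2.
Qed.

Lemma prime_sum (q : A -> Prop) (I : finType) (F : I -> A) :
  prime_ideal q -> (forall i, q (F i)) -> q (\sum_i F i).
Proof.
move=> [q0 qD _ _ _] hF; elim/big_ind: _ => //.
Qed.

Lemma Good_local (q : A -> Prop) a : prime_ideal q -> Good a ->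
  exists ε r t, [/\ ~ q ε, ε * ee t = ε & ε * a = ε * (eta r * x t)].
Proof.
move=> hq; case=> I [ep [r [t [h1 h2 h3 ->]]]].
have [i hi] : exists i, ~ q (ep i).
  apply: NNPP => hn; have [_ _ _ q1 _] := hq; apply: q1; rewrite -h1.
  apply: prime_sum => // i; apply: NNPP => hn'; apply: hn; by exists i.
exists (ep i), (r i), (t i); split => //; exact: orth_pick.
Qed.
End Hull.


Section Gen.
Variables (R A : comPzRingType) (eta : {rmorphism R -> A}) (x : R -> A).
Hypothesis hA : is_pinv_hull eta x.

Let hx : forall s, pointwise_inverse (eta s) (x s) := proj1 hA.

Definition goodb (a : A) : bool :=
  if excluded_middle_informative (Good eta x a) then true else false.

Lemma goodbP a : goodb a = true <-> Good eta x a.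
Proof. by rewrite /goodb; case: excluded_middle_informative. Qed.

Lemma goodb_closed : GRing.subring_closed (goodb : {pred A}).
Proof.
split.
- by apply/goodbP; rewrite -(rmorph1 eta); exact: (Good_eta hx).
- move=> a b /goodbP ha /goodbP hb; apply/goodbP.
  by apply: (Good_add hx) => //; apply: Good_opp.
- move=> a b /goodbP ha /goodbP hb; apply/goodbP; exact: (Good_mul hx).
Qed.

Definition Sg := {a : A | goodb a}.
HB.instance Definition _ := [isSub of Sg for (@proj1_sig A (fun a => goodb a))].
HB.instance Definition _ := [Choice of Sg by <:].
HB.instance Definition _ := GRing.SubChoice_isSubComPzRing.Build A goodb Sg goodb_closed.

Definition fS (r : R) : Sg := exist _ (eta r) (proj2 (goodbP _) (Good_eta hx r)).
Definition yS (s : R) : Sg := exist _ (x s) (proj2 (goodbP _) (Good_x hx s)).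

Lemma fS_zmod : zmod_morphism fS.
Proof. by move=> a b; apply: val_inj; rewrite /= rmorphB. Qed.
Lemma fS_monoid : monoid_morphism fS.
Proof. by split; [apply: val_inj; rewrite /= rmorph1 | move=> a b; apply: val_inj; rewrite /= rmorphM]. Qed.
HB.instance Definition _ := GRing.isZmodMorphism.Build R Sg fS fS_zmod.
HB.instance Definition _ := GRing.isMonoidMorphism.Build R Sg fS fS_monoid.

Lemma all_Good (a : A) : Good eta x a.
Proof.
have hy : forall s, pointwise_inverse (fS s) (yS s).
  move=> s; have [h1 h2] := hx s; split; apply: val_inj; by rewrite /= ?rmorphM.
have [[g [g1 g2]] uniq] := proj2 hA Sg fS yS hy.
pose h : {rmorphism A -> A} := (val \o g).
have := proj2 hA A eta x hx.
case=> _ /(_ h idfun) U.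
have : h a = a.
  apply: U => //= r; rewrite ?g1 ?g2 //.
move=> <-; apply/goodbP; exact: valP.
Qed.
End Gen.


Section Purity.
Variable A : comPzRingType.
Hypothesis vnr : forall a : A, exists b, pointwise_inverse a b.
Variables (N' N : lmodType A) (f : {linear N' -> N}).

Definition rowsol (X : lmodType A) (F : N' -> X) (n : nat)
  (e : (nat -> A) * N') (y : nat -> X) : Prop :=
  \sum_(k < n) e.1 k *: y k = F e.2.

Lemma comb n (eqs : seq ((nat -> A) * N')%type) :
  exists E (b : nat -> A) (d : N'),
    (forall e, List.In e eqs -> e.1 n * E = e.1 n) /\
    (forall y : nat -> N, (forall e, List.In e eqs -> rowsol f n.+1 e y) ->
       E *: y n + \sum_(k < n) b k *: y k = f d).
Proof.
elim: eqs => [|e l [E [b [d [h1 h2]]]]].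
  exists 0, (fun _ => 0), 0; split => // y _.
  by rewrite scale0r add0r linear0 big1 // => k _; rewrite scale0r.
set a := e.1 n.
have [be hbe] := vnr (a * (1 - E)).
set g := a * (1 - E) * be.
have hg : a * (1 - E) * g = a * (1 - E) by rewrite /g pw_absorb.
set lam := (1 - E) * be.
have glam : g = lam * a by rewrite /g /lam; ring.
exists (E * (1 - g) + lam * a), (fun k => (1 - g) * b k + lam * e.1 k),
  ((1 - g) *: d + lam *: e.2); split.
  move=> e0 [<-|he0].
    rewrite -/a -glam.
    have -> : a * (E * (1 - g) + g) = a * E + a * (1 - E) * g by ring.
    by rewrite hg; ring.
  have := h1 _ he0; set c := e0.1 n => hc.
  rewrite -glam.
  have -> : c * (E * (1 - g) + g) = (c * E) * (1 - g) + c * g by ring.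
  by rewrite hc; ring.
move=> y hy.
have := h2 y (fun e0 he0 => hy e0 (or_intror he0)).
have := hy e (or_introl erefl); rewrite /rowsol big_ord_recr /= -/a => he.
move=> hc.
rewrite linearD !linearZ /= -hc -he.
set SB := \sum_(k < n) b k *: y k; set SE := \sum_(k < n) e.1 k *: y k.
have -> : \sum_(k < n) ((1 - g) * b k + lam * e.1 k) *: y k = (1 - g) *: SB + lam *: SE.
  rewrite /SB /SE !scaler_sumr -big_split; apply: eq_bigr => k _; by rewrite scalerDl !scalerA.
rewrite scalerDl !scalerDr !scalerA (mulrC E) -/a.
by rewrite addrACA [lam *: SE + _]addrC.
Qed.
Hypothesis finj : injective f.

Lemma purity n (eqs : seq ((nat -> A) * N')%type) :
  (exists y : nat -> N, forall e, List.In e eqs -> rowsol f n e y) ->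
  exists z : nat -> N', forall e, List.In e eqs -> rowsol id n e z.
Proof.
elim: n eqs => [|n IH] eqs [y hy].
  exists (fun _ => 0) => e he; have := hy e he; rewrite /rowsol !big_ord0 /= => h.
  by apply: finj; rewrite -h linear0.
have [E [b [d [h1 h2]]]] := comb n eqs.
pose red (e : ((nat -> A) * N')%type) :=
  ((fun k => e.1 k - e.1 n * b k), e.2 - e.1 n *: d).
have [z hz] : exists z : nat -> N', forall e, List.In e (map red eqs) -> rowsol id n e z.
  apply: IH; exists y => e' /List.in_map_iff [e [<- he]].
  have hc := h2 y hy; have := hy e he.
  rewrite /rowsol big_ord_recr /= => hr.
  rewrite linearB linearZ /= -hr -hc.
  under eq_bigr do rewrite scalerBl -scalerA.
  rewrite sumrB.
  rewrite -scaler_sumr.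
  rewrite scalerDr.
  rewrite scalerA.
  rewrite (h1 e he).
  by rewrite opprD addrA addrK.
exists (fun k => if (k < n)%N then z k else d - \sum_(j < n) b j *: z j) => e he.
have := hz (red e) (List.in_map red _ _ he); rewrite /rowsol /= => hr.
rewrite big_ord_recr /= ltnn.
under eq_bigr => i _ do rewrite ltn_ord.
have -> : \sum_(i < n) e.1 i *: z i =
   \sum_(i < n) (e.1 i - e.1 n * b i) *: z i + e.1 n *: \sum_(j < n) b j *: z j.
  rewrite scaler_sumr -big_split; apply: eq_bigr => i _.
  rewrite scalerBl scalerA. exact/esym/subrK.
by rewrite hr scalerBr addrACA subrK subrr addr0.
Qed.
End Purity.


Lemma In_mem (T : eqType) (x : T) (s : seq T) : List.In x s -> x \in s.
Proof. elim: s => //= y s IH [->|h]; rewrite inE ?eqxx //; by rewrite IH ?orbT. Qed.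

Lemma mem_In (T : eqType) (x : T) (s : seq T) : x \in s -> List.In x s.
Proof. elim: s => //= y s IH; rewrite inE => /orP [/eqP ->|h]; [by left|right; exact: IH]. Qed.

Section Keys.
Variable A : comPzRingType.
Variables (M N : lmodType A).

Lemma sum_keys (K : seq (M * N)%type) (s : seq (int * (M * N))%type) (P : pred (M * N)%type) :
  uniq K -> (forall c, c \in s -> c.2 \in K) ->
  \sum_(c <- s | P c.2) c.1 = \sum_(k <- K | P k) fcoef s k.
Proof.
move=> uK; elim: s => [|c s IH] hs.
  by rewrite big_nil big1 // => k _; rewrite /fcoef big_nil.
rewrite big_cons IH; last by move=> c' hc'; apply: hs; rewrite inE hc' orbT.
have hc : c.2 \in K by apply: hs; rewrite inE eqxx.
have fc : forall k, fcoef (c :: s) k = (if c.2 == k then c.1 else 0) + fcoef s k.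
  by move=> k; rewrite /fcoef big_cons; case: (c.2 == k); rewrite ?add0r.
under [in RHS]eq_bigr => k _ do rewrite fc.
rewrite big_split /=.
have -> : \sum_(k <- K | P k) (if c.2 == k then c.1 else 0) = if P c.2 then c.1 else 0.
  rewrite big_mkcond (bigD1_seq c.2) //= eqxx big1 ?addr0.
    by case: (P c.2).
  move=> k hk; rewrite eq_sym (negbTE hk); by case: (P k).
by case: (P c.2); rewrite ?add0r.
Qed.
End Keys.

Section FMap.
Variable A : comPzRingType.
Variables (M N M2 N2 : lmodType A).

Definition mapc (h : (M * N)%type -> (M2 * N2)%type) (s : seq (int * (M * N))%type) :=
  map (fun c => (c.1, h c.2)) s.

Lemma fcoef_map h s t : fcoef s =1 fcoef t -> fcoef (mapc h s) =1 fcoef (mapc h t).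
Proof.
move=> hst p; rewrite /fcoef /mapc !big_map /=.
set K := undup (map snd (s ++ t)).
have uK : uniq K by apply: undup_uniq.
rewrite (@sum_keys _ _ _ K s (fun k => h k == p)) //; last first.
  by move=> c hc; rewrite mem_undup map_f // mem_cat hc.
rewrite (@sum_keys _ _ _ K t (fun k => h k == p)) //; last first.
  by move=> c hc; rewrite mem_undup map_f // mem_cat hc orbT.
by apply: eq_bigr => k _; apply: hst.
Qed.
End FMap.

Section Constraints.
Variable A : comPzRingType.
Variables (M N N' : lmodType A).

Definition mapN (g : N -> N') (t : seq (int * (M * N))%type) : seq (int * (M * N'))%type :=
  map (fun c => (c.1, (c.2.1, g c.2.2))) t.

Definition cons_ok (g : N -> N') (c : ((N * N) + (A * N))%type) : Prop :=
  match c with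
  | inl (n, n') => g (n + n') = g n + g n'
  | inr (a, n) => g (a *: n) = a *: g n
  end.

Lemma rel_constraints (t0 : seq (int * (M * N))%type) : tens_rel t0 ->
  exists C : seq ((N * N) + (A * N))%type,
    forall g, (forall c, c \in C -> cons_ok g c) -> tens_rel (mapN g t0).
Proof.
elim => [m m' n|m n n'|a m n| |s t _ [C1 h1] _ [C2 h2]|k s _ [C h]|s t _ [C h] hst].
- exists [::] => g _; exact: tens_rel_addl.
- exists [:: inl (n, n')] => g hg; have := hg (inl (n, n')); rewrite inE eqxx /= => ->//.
  exact: tens_rel_addr.
- exists [:: inr (a, n)] => g hg; have := hg (inr (a, n)); rewrite inE eqxx /= => ->//.
  exact: tens_rel_scale.
- exists [::] => g _; exact: tens_rel_nil.
- exists (C1 ++ C2) => g hg; rewrite /mapN map_cat; apply: tens_rel_cat.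
    by apply: h1 => c hc; apply: hg; rewrite mem_cat hc.
  by apply: h2 => c hc; apply: hg; rewrite mem_cat hc orbT.
- exists C => g hg; have := tens_rel_zscale k (h g hg).
  by rewrite /mapN -!map_comp.
- exists C => g hg; apply: (tens_rel_free (h g hg)).
  exact: (fcoef_map (fun p => (p.1, g p.2)) hst).
Qed.
End Constraints.

Section Flat.
Variable A : comPzRingType.
Hypothesis vnr : forall a : A, exists b, pointwise_inverse a b.

Definition delta (i k : nat) : A := (k == i)%:R.

Lemma sum_delta (X : lmodType A) (n : nat) (y : nat -> X) i : (i < n)%N ->
  \sum_(k < n) delta i k *: y k = y i.
Proof.
move=> hi; rewrite (bigD1 (Ordinal hi)) //= /delta eqxx scale1r big1 ?addr0 //.
move=> k hk; have : (k : nat) != i.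
  by apply: contra hk => /eqP e; apply/eqP; apply: val_inj.
by move/negbTE => ->; rewrite scale0r.
Qed.

Lemma sum_inl (X : lmodType A) n (y : nat -> X) i j l :
  (i < n)%N -> (j < n)%N -> (l < n)%N ->
  \sum_(k < n) (delta i k - delta j k - delta l k) *: y k = y i - y j - y l.
Proof.
move=> hi hj hl; rewrite -(sum_delta y hi) -(sum_delta y hj) -(sum_delta y hl).
rewrite -!sumrB; apply: eq_bigr => k _; by rewrite !scalerBl.
Qed.

Lemma sum_inr (X : lmodType A) n (y : nat -> X) (a : A) i j :
  (i < n)%N -> (j < n)%N ->
  \sum_(k < n) (delta i k - a * delta j k) *: y k = y i - a *: y j.
Proof.
move=> hi hj; rewrite -(sum_delta y hi) -(sum_delta y hj) scaler_sumr.
rewrite -!sumrB; apply: eq_bigr => k _; by rewrite !scalerBl scalerA.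
Qed.

Lemma flat_all (M : lmodType A) : flat_module M.
Proof.
move=> N' N f finj s hs.
have [C hC] := @rel_constraints _ _ _ N' _ hs.
pose ptsof (c : ((N * N) + (A * N))%type) : seq N :=
  match c with inl (n, n') => [:: n; n'; n + n'] | inr (a, n) => [:: n; a *: n] end.
pose Pts := flatten (map ptsof C) ++ map (fun c => f c.2.2) s.
pose idx (p : N) := index p Pts.
pose nU := size Pts.
have Cin : forall c p, c \in C -> p \in ptsof c -> (idx p < nU)%N.
  move=> c p hc hp; rewrite /idx /nU index_mem mem_cat; apply/orP; left.
  by apply/flatten_mapP; exists c.
have Sin : forall c, c \in s -> (idx (f c.2.2) < nU)%N.
  move=> c hc; rewrite /idx /nU index_mem mem_cat; apply/orP; right.
  by apply: map_f.
pose eqC (c : ((N * N) + (A * N))%type) : ((nat -> A) * N')%type :=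
  match c with
  | inl (n, n') => ((fun k => delta (idx (n + n')) k - delta (idx n) k - delta (idx n') k), 0)
  | inr (a, n) => ((fun k => delta (idx (a *: n)) k - a * delta (idx n) k), 0)
  end.
pose eqS (c : (int * (M * N'))%type) : ((nat -> A) * N')%type :=
  (delta (idx (f c.2.2)), c.2.2).
pose eqs := map eqC C ++ map eqS s.
have [z hz] : exists z : nat -> N', forall e, List.In e eqs -> rowsol id nU e z.
  apply: (purity vnr finj); exists (fun k => nth 0 Pts k) => e.
  have nthP : forall p, p \in Pts -> nth 0 Pts (idx p) = p by move=> p hp; exact: nth_index.
  move=> he; case: (List.in_app_or _ _ _ he) => /List.in_map_iff [c [<- hc]]; last first.
    have hc' := In_mem hc.
    rewrite /rowsol /= (sum_delta _ (Sin c hc')) nthP //.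
    by rewrite mem_cat; apply/orP; right; apply: map_f.
  have hc' := In_mem hc.
  have inP : forall p, p \in ptsof c -> p \in Pts.
    by move=> p hp; rewrite mem_cat; apply/orP; left; apply/flatten_mapP; exists c.
  case: c hc hc' inP => [[n n']|[a n]] hc hc' inP; rewrite /rowsol /=.
    rewrite (sum_inl _ (Cin _ (n + n') hc' _) (Cin _ n hc' _) (Cin _ n' hc' _)) ?inE ?eqxx ?orbT //.
    rewrite !nthP ?inP ?inE ?eqxx ?orbT // linear0.
    by rewrite [n + n']addrC addrK subrr.
  rewrite (sum_inr _ _ (Cin _ (a *: n) hc' _) (Cin _ n hc' _)) ?inE ?eqxx ?orbT //.
  by rewrite !nthP ?inP ?inE ?eqxx ?orbT // subrr linear0.
pose g (p : N) := z (idx p).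
have gC : forall c, c \in C -> cons_ok g c.
  move=> c hc; have := hz (eqC c) (List.in_or_app _ _ _ (or_introl (List.in_map eqC _ _ (mem_In hc)))).
  case: c hc => [[n n']|[a n]] hc; rewrite /rowsol /=.
    rewrite (sum_inl _ (Cin _ (n + n') hc _) (Cin _ n hc _) (Cin _ n' hc _)) ?inE ?eqxx ?orbT //.
    move/eqP; rewrite subr_eq0 subr_eq => /eqP; rewrite /g => ->; by rewrite addrC.
  rewrite (sum_inr _ _ (Cin _ (a *: n) hc _) (Cin _ n hc _)) ?inE ?eqxx ?orbT //.
  by move/eqP; rewrite subr_eq0 => /eqP.
have := hC g gC; rewrite /mapN -map_comp map_id_in //.
move=> c hc /=; have := hz (eqS c) (List.in_or_app _ _ _ (or_intror (List.in_map eqS _ _ (mem_In hc)))).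
rewrite /rowsol /= (sum_delta _ (Sin c hc)) /g => ->.
by case: c hc => ? [].
Qed.

Lemma absflat : absolutely_flat A.
Proof. move=> M; exact: flat_all. Qed.
End Flat.


Lemma loc_refl (T : comPzRingType) (q : T -> Prop) (a : T * T) : ~ q 1 -> loc_eq q a a.
Proof. by move=> h; exists 1; split => //; rewrite subrr mulr0. Qed.

Lemma prime_mul (T : comPzRingType) (q : T -> Prop) a b : prime_ideal q ->
  ~ q a -> ~ q b -> ~ q (a * b).
Proof. by move=> [_ _ _ _ qP] ha hb /qP []. Qed.

Lemma prime_mulr (T : comPzRingType) (q : T -> Prop) a b : prime_ideal q ->
  q a -> q (a * b).
Proof. by move=> [_ _ qM _ _] ha; rewrite mulrC; apply: qM. Qed.

Unset Implicit Arguments.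
Theorem theorem3p8 (R A : comPzRingType) (eta : {rmorphism R -> A})
  (x : R -> A) (hA : is_pinv_hull eta x) :
  (forall q : A -> Prop, prime_ideal q ->
     let p : R -> Prop := fun r => q (eta r) in
     let phi : R * R -> A * A := fun y => (eta y.1, eta y.2) in
     [/\ loc_is_field q,
         (forall y : R * R, ~ p y.2 -> ~ q (phi y).2),
         (forall y z : R * R, ~ p y.2 -> ~ p z.2 ->
            kappa_eq p y z -> loc_eq q (phi y) (phi z)),
         loc_eq q (phi (loc_one R)) (loc_one A) /\
         (forall y z : R * R, ~ p y.2 -> ~ p z.2 ->
            loc_eq q (phi (loc_add y z)) (loc_add (phi y) (phi z)) /\
            loc_eq q (phi (loc_mul y z)) (loc_mul (phi y) (phi z))) &
         (forall y z : R * R, ~ p y.2 -> ~ p z.2 ->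
            loc_eq q (phi y) (phi z) -> kappa_eq p y z) /\
         (forall w : A * A, ~ q w.2 ->
            exists y : R * R, ~ p y.2 /\ loc_eq q (phi y) w)]) /\
  absolutely_flat A.
Proof.
have hx : forall s, pointwise_inverse (eta s) (x s) := proj1 hA.
have allG := all_Good hA.
have vnr : forall a : A, exists b, pointwise_inverse a b.
  by move=> a; apply: (Good_reg hx); apply: allG.
split; last exact: absflat.
move=> q hq p phi.
have [q0 qD qM q1 qP] := hq.
have eeq : forall c, q (eta c) -> q (ee eta x c).
  by move=> c hc; rewrite /ee; apply: prime_mulr.
split.
- split.
    move=> [u [hu h]]; apply: hu; move: h; rewrite /= mul0r mulr1 sub0r mulrN1.
    by move/eqP; rewrite oppr_eq0 => /eqP ->.
  move=> [x1 x2] /= hx2 hnz.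
  have [b hb] := vnr x1.
  have hq1e : q (1 - x1 * b).
    apply: NNPP => hn; apply: hnz; exists (1 - x1 * b); split => //=.
    by rewrite mul0r subr0 mulr1 mulrBl mul1r mulrC pw_absorb // subrr.
  have hqe : ~ q (x1 * b).
    by move=> he; apply: q1; rewrite -(subrK (x1 * b) 1); apply: qD.
  exists (x2 * b, 1); split => //=.
  exists (x1 * b); split => //=.
  have -> : x1 * b * (x1 * (x2 * b) * 1 - 1 * (x2 * 1)) = x2 * ((x1 * b) * (x1 * b) - x1 * b) by ring.
  by rewrite pw_idem // subrr mulr0.
- by move=> y h.
- move=> [y1 y2] [z1 z2] /= hy hz [c [w [hc [hw [u [hu h]]]]]].
  move: h => /= /(congr1 eta); rewrite rmorph0 !rmorphM rmorphB rmorphM rmorphB !rmorphM => h.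
  exists (eta u * eta w * (1 - ee eta x c)); split.
    apply: (prime_mul hq); first exact: (prime_mul hq).
    move=> h1; apply: q1; rewrite -(subrK (ee eta x c) 1); apply: qD => //; exact: eeq.
  have hc0 : (1 - ee eta x c) * eta c = 0.
    by rewrite mulrBl mul1r /ee mulrC pw_absorb // subrr.
  transitivity ((1 - ee eta x c) * (eta u * ((eta y1 * eta z2 - eta z1 * eta y2) * eta w))); first by ring.
  rewrite -[eta u * _]mulr1 -[_ * 1]/(eta u * _ * 1) mulr1.
  have -> : eta u * ((eta y1 * eta z2 - eta z1 * eta y2) * eta w) = eta u * (eta c * (eta y2 * eta z2)).
    by apply/eqP; rewrite -subr_eq0 -mulrBr h.
  transitivity (((1 - ee eta x c) * eta c) * (eta u * (eta y2 * eta z2))); first by ring.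
  by rewrite hc0 mul0r.
- split.
    by rewrite /phi /= rmorph1; apply: loc_refl.
  move=> [y1 y2] [z1 z2] hy hz; split.
    have -> : phi (loc_add (y1, y2) (z1, z2)) = loc_add (phi (y1, y2)) (phi (z1, z2)).
      by rewrite /phi /loc_add /= rmorphD !rmorphM.
    exact: loc_refl.
  have -> : phi (loc_mul (y1, y2) (z1, z2)) = loc_mul (phi (y1, y2)) (phi (z1, z2)).
    by rewrite /phi /loc_mul /= !rmorphM.
  exact: loc_refl.
- split.
    move=> [y1 y2] [z1 z2] /= hy hz [u [hu h]].
    exists (y1 * z2 - z1 * y2), (y2 * z2); split; [|split].
    + rewrite /p rmorphB !rmorphM; move: h => /= h.
      have : q (u * (eta y1 * eta z2 - eta z1 * eta y2)) by rewrite h.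
      by case/qP.
    + by rewrite /p rmorphM; apply: (prime_mul hq).
    + by apply: loc_refl; rewrite /p rmorph1.
  move=> [w1 w2] /= hw2.
  have [ε [r [t [h1 h2 h3]]]] := Good_local hq (allG w1).
  have [ε' [r' [t' [h1' h2' h3']]]] := Good_local hq (allG w2).
  have het : ~ q (eta t).
    move=> ht; apply: h1; rewrite -h2 mulrC; apply: prime_mulr => //; exact: eeq.
  have her' : ~ q (eta r').
    move=> hr; have : q (ε' * w2).
      by rewrite h3' mulrA mulrC; apply: (qM); exact: (qM).
    by case/qP.
  exists (r * t', t * r'); split.
    by rewrite /p /= rmorphM; apply: (prime_mul hq).
  exists (ε * ε'); split; first exact: (prime_mul hq).
  rewrite /phi /= !rmorphM mulrBr; apply/eqP; rewrite subr_eq0; apply/eqP.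
  transitivity ((ε' * w2) * (ε * eta r * eta t')); first by ring.
  rewrite h3'.
  transitivity ((ε' * ee eta x t') * (ε * eta r * eta r')); first by rewrite /ee; ring.
  rewrite h2'.
  symmetry.
  transitivity ((ε * w1) * (ε' * eta t * eta r')); first by ring.
  rewrite h3.
  transitivity ((ε * ee eta x t) * (ε' * eta r * eta r')); first by rewrite /ee; ring.
  rewrite h2; ring.
Qed.
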